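(* Let $\epsilon>0$ be a constant, $|N|=n$, $k=n^{1/4-\epsilon/2}$, $r=n^{1/4}$, and define $g(S)=|S|$, $b(S)=\min(|S|,\log n)$, $m(S)=\min(1,|S|/n^{1/2})$, $m^+(S)=n^{-1/4}\min(n^{1/2},|S|)$. Then the class $\mathcal F(g,b,m,m^+)$ has an $(n^{1/4-\epsilon},0)$-gap with $t=n^{1/2+\epsilon/4}$.
   Context: $\mathcal P$ is the set of partitions $P$ of $N$ into $r$ parts $T_1,\dots,T_r$ of $k$ elements each and a part $M$ of the remaining $n-rk$ elements; $\mathcal U(\mathcal P)$ is the uniform distribution on $\mathcal P$; $T_{-i}=\bigcup_{j\ne i}T_j$. $\mathcal F(g,b,m,m^+)=\{f^{P,i}:P\in\mathcal P,i\in[r]\}$ with $f^{P,i}(S)=(1-m(S\cap M))(g(S\cap T_i)+b(S\cap T_{-i}))+m^+(S\cap M)$. The class has an $(\alpha,\beta)$-gap with parameter $t$ if: (1) for every fixed $S$ with $|S|\le t$, with probability $1-n^{-\omega(1)}$ over $P\sim\mathcal U(\mathcal P)$, $g(S\cap T_i)+b(S\cap T_{-i})$ does not depend on $i$; (2) for every fixed $S$ with $|S|\ge t$, with probability $1-n^{-\omega(1)}$ over $P\sim\mathcal U(\mathcal P)$, $m(S\cap M)=1$; (3) for every $S$ with $|S|=k$, $g(S)\ge\max\{\alpha b(S),\alpha m^+(S)\}$; (4) for all $S_1$ with $|S_1|=k$ and $S_2$ with $|S_2|=k/r$, $g(S_1)\ge(1-\beta)r\,g(S_2)$. Statements are asymptotic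 in $n$. *)

(* Defs.v *)
From HB Require Import structures.
From mathcomp Require Import all_boot all_order all_algebra.
From mathcomp Require Import all_classical all_reals all_analysis.
Set Implicit Arguments. Unset Strict Implicit. Unset Printing Implicit Defensive.
Import Order.TTheory GRing.Theory Num.Theory.
Local Open Scope ring_scope.

Section Partitions.
Variables (n r k : nat).

(* A partition P of N = 'I_n into labelled parts T_1..T_r of k elements each
   and the remaining part M; P is represented by the family (T_i)_i, M being
   the complement of their union. *)
Definition partitions : {set {ffun 'I_r -> {set 'I_n}}} :=
  [set T : {ffun 'I_r -> {set 'I_n}} | [forall i, #|T i| == k] &&
           [forall i, forall j, (i != j) ==> [disjoint T i & T j]]].

Definition Mpart (T : {ffun 'I_r -> {set 'I_n}}) : {set 'I_n} :=
  ~: \bigcup_(i < r) T i.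

Definition Tminus (T : {ffun 'I_r -> {set 'I_n}}) (i : 'I_r) : {set 'I_n} :=
  \bigcup_(j < r | j != i) T j.

Definition prob_unif {R : realType} (E : pred {ffun 'I_r -> {set 'I_n}}) : R :=
  #|[set T in partitions | E T]|%:R / #|partitions|%:R.

Definition fPi {R : realType} (g b m mp : {set 'I_n} -> R)
  (T : {ffun 'I_r -> {set 'I_n}}) (i : 'I_r) (S : {set 'I_n}) : R :=
  (1 - m (S :&: Mpart T)) * (g (S :&: T i) + b (S :&: Tminus T i))
  + mp (S :&: Mpart T).

End Partitions.

(* Asymptotic (alpha,beta)-gap with parameter t for the class F(g,b,m,m^+),
   where all data are indexed by n = |N|.  "with probability 1 - n^{-omega(1)}"
   means: the failure probability is at most n^{-c} for every c > 0, for all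
   sufficiently large n, uniformly over the fixed sets S. *)
Definition has_gap {R : realType} (k r : nat -> nat)
  (g b m mp : forall n : nat, {set 'I_n} -> R) (alpha beta t : nat -> R) : Prop :=
  (forall c : R, 0 < c -> exists n0 : nat, forall n : nat, (n0 <= n)%N ->
     forall S : {set 'I_n}, #|S|%:R <= t n ->
       @prob_unif n (r n) (k n) R
         (fun T : {ffun 'I_(r n) -> {set 'I_n}} =>
            ~~ [forall i, forall j,
                  g n (S :&: T i) + b n (S :&: Tminus T i)
                  == g n (S :&: T j) + b n (S :&: Tminus T j)])
       <= (n%:R : R) `^ (- c)) /\
  (forall c : R, 0 < c -> exists n0 : nat, forall n : nat, (n0 <= n)%N ->
     forall S : {set 'I_n}, t n <= #|S|%:R ->
       @prob_unif n (r n) (k n) R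
         (fun T : {ffun 'I_(r n) -> {set 'I_n}} => m n (S :&: Mpart T) != 1)
       <= (n%:R : R) `^ (- c)) /\
  (exists n0 : nat, forall n : nat, (n0 <= n)%N ->
     forall S : {set 'I_n}, #|S| = k n ->
       Num.max (alpha n * b n S) (alpha n * mp n S) <= g n S) /\
  (exists n0 : nat, forall n : nat, (n0 <= n)%N ->
     forall S1 S2 : {set 'I_n}, #|S1| = k n ->
       (#|S2|%:R : R) = (k n)%:R / (r n)%:R ->
       (1 - beta n) * (r n)%:R * g n S2 <= g n S1).

Definition L25kpar {R : realType} (eps : R) (n : nat) : nat :=
  Num.truncn ((n%:R : R) `^ (4^-1 - eps / 2)).
Definition L25rpar {R : realType} (n : nat) : nat :=
  Num.truncn ((n%:R : R) `^ 4^-1).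
Definition L25gfun {R : realType} (n : nat) (S : {set 'I_n}) : R := #|S|%:R.
Definition L25bfun {R : realType} (n : nat) (S : {set 'I_n}) : R :=
  Num.min (#|S|%:R) (ln (n%:R : R)).
Definition L25mfun {R : realType} (n : nat) (S : {set 'I_n}) : R :=
  Num.min 1 (#|S|%:R / (n%:R : R) `^ 2^-1).
Definition L25mpfun {R : realType} (n : nat) (S : {set 'I_n}) : R :=
  (n%:R : R) `^ (- 4^-1) * Num.min ((n%:R : R) `^ 2^-1) (#|S|%:R).

(* Main.v *)
Require Import Defs.
From HB Require Import structures.
From mathcomp Require Import all_boot all_order all_algebra.
From mathcomp Require Import all_classical all_reals all_analysis.
Import Order.TTheory GRing.Theory Num.Theory.
Local Open Scope ring_scope.
From mathcomp Require Import perm zify ring lra.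
Module CombM.
Local Notation inE := finset.inE (only parsing).
Local Notation in_set := finset.in_set (only parsing).
Local Notation setD_eq0 := finset.setD_eq0 (only parsing).
Local Notation set0 := finset.set0 (only parsing).
Local Notation set0Pn := finset.set0Pn (only parsing).
Local Notation setDP := finset.setDP (only parsing).
Local Notation setP := finset.setP (only parsing).
Local Notation subsetI := finset.subsetI (only parsing).
Local Close Scope ring_scope.

Lemma expn_mono m1 m2 e : m1 <= m2 -> m1 ^ e <= m2 ^ e.
Proof. by move=> h; elim: e => [|e IH]; rewrite ?expnS ?leq_mul. Qed.

Lemma ffact_exp_le a N L : a <= N -> a ^_ L * N ^ L <= N ^_ L * a ^ L.
Proof.
move=> aN; elim: L => [|L IH]; first by rewrite !muln1.
rewrite !ffactnSr !expnS.
have H : (a - L) * N <= (N - L) * a by nia.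
have := leq_mul IH H.
set x := a ^_ L; set y := N ^ L; set z := N ^_ L; set w := a ^ L.
by move=> h; nia.
Qed.

Lemma bin_exp_le a N L : a <= N -> 'C(a, L) * N ^ L <= 'C(N, L) * a ^ L.
Proof.
move=> aN; rewrite -(leq_pmul2r (fact_gt0 L)) mulnAC bin_ffact [X in _ <= X]mulnAC bin_ffact.
exact: ffact_exp_le.
Qed.

Lemma bin_le_exp s L : 'C(s, L) <= s ^ L.
Proof.
apply: leq_trans (leq_pmulr _ (fact_gt0 L)) _; rewrite bin_ffact.
elim: L => [|L IH] //; rewrite ffactnSr expnS mulnC leq_mul ?leq_subr //.
Qed.

Lemma card_sum_pred (X : finType) (D q : pred X) :
  #|[set x | D x & q x]| = \sum_(x | D x) (q x : nat).
Proof.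
rewrite -sum1_card big_mkcond [RHS]big_mkcond; apply: eq_bigr => x _.
by rewrite inE; case: (D x); case: (q x).
Qed.

Set Implicit Arguments. Unset Strict Implicit.
Section Comb.
Variables (n r k : nat).
Local Notation P := (partitions n r k).
Local Notation FT := {ffun 'I_r -> {set 'I_n}}.

Definition UU (T : FT) : {set 'I_n} := \bigcup_(i < r) T i.

Definition actT (s : {perm 'I_n}) (T : FT) : FT := [ffun i => s @: T i].

Lemma actTP (s : {perm 'I_n}) T : T \in P -> actT s T \in P.
Proof.
rewrite !inE => /andP[/forallP Hc /forallP Hd]; apply/andP; split.
  by apply/forallP => i; rewrite ffunE card_imset //; exact: perm_inj.
apply/forallP => i; apply/forallP => j; apply/implyP => ij.
rewrite !ffunE imset_disjoint; last exact: perm_inj.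
by move/forallP: (Hd i) => /(_ j) /implyP; apply.
Qed.

Lemma actTK (s : {perm 'I_n}) : cancel (actT s) (actT s^-1).
Proof.
move=> T; apply/ffunP => i; rewrite !ffunE -imset_comp.
by rewrite (eq_imset _ (permK s)) imset_id.
Qed.

Lemma UU_act (s : {perm 'I_n}) T : UU (actT s T) = s @: UU T.
Proof.
apply/setP => x; apply/bigcupP/imsetP => [[i _]|[y /bigcupP[i _ yi] ->]].
  by rewrite ffunE => /imsetP[y yi ->]; exists y => //; apply/bigcupP; exists i.
by exists i => //; rewrite ffunE imset_f.
Qed.

Definition fA (A : {set 'I_n}) := #|[set T in P | A \subset UU T]|.

Lemma fA_le (s : {perm 'I_n}) (A : {set 'I_n}) : fA A <= fA (s @: A).
Proof.
rewrite /fA -(card_imset _ (can_inj (actTK s))).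
apply: subset_leq_card; apply/fintype.subsetP => y /imsetP[T].
rewrite inE => /andP[TP AU] ->.
by rewrite inE actTP // UU_act imsetS.
Qed.

Lemma fA_eq (s : {perm 'I_n}) (A : {set 'I_n}) : fA (s @: A) = fA A.
Proof.
apply/eqP; rewrite eqn_leq fA_le andbT.
have e : (s^-1)%g @: (s @: A) = A.
  apply/setP => x; apply/imsetP/idP => [[y /imsetP[z zA ->] ->]|xA].
    by rewrite permK.
  by exists (s x); [exact: imset_f | rewrite permK].
by have := fA_le (s^-1)%g (s @: A); rewrite e.
Qed.

Lemma perm_trans_sets (A B : {set 'I_n}) :
  #|A| = #|B| -> exists s : {perm 'I_n}, s @: A = B.
Proof.
move: {2}#|A :\: B| (leqnn #|A :\: B|) => m; elim: m A => [|m IH] A.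
  rewrite leqn0 cards_eq0 setD_eq0 => AB cAB.
  have -> : A = B by apply/eqP; rewrite eqEcard AB cAB leqnn.
  by exists 1%g; rewrite (eq_imset _ (@perm1 _)) imset_id.
move=> Hm cAB.
have [AB0|] := eqVneq (A :\: B) set0.
  by apply: (IH A) => //; rewrite AB0 cards0.
case/set0Pn => a /setDP [aA aB].
have : B :\: A != set0.
  apply/eqP => BA0.
  have eBA : B = A by apply/eqP; rewrite eqEcard -setD_eq0 BA0 eqxx cAB leqnn.
  by rewrite eBA aA in aB.
case/set0Pn => b /setDP [bB bA].
pose t := tperm a b.
have cA' : #|t @: A| = #|B| by rewrite card_imset //; exact: perm_inj.
have sub : t @: A :\: B \subset (A :\: B) :\ a.
  apply/fintype.subsetP => _ /setDP [/imsetP [x xA ->] txB].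
  rewrite !inE; move: txB; rewrite /t.
  case: tpermP => [xa|xb|xa xb].
  - by rewrite bB.
  - by rewrite -xb xA in bA.
  - by move=> h; apply/and3P; split => //; apply/eqP.
have : #|t @: A :\: B| <= m.
  have := subset_leq_card sub; have := cardsD1 a (A :\: B).
  rewrite inE aA aB /= => h1 h2; clearbody t; rewrite h1 in Hm; move: Hm h2; clear; lia.
move/(IH _) => /(_ cA') [s Hs].
exists (t * s)%g; rewrite -Hs -imset_comp; apply: eq_imset => x /=.
by rewrite permM.
Qed.

Lemma card_UU T : #|UU T| <= \sum_(i < r) #|T i|.
Proof.
rewrite /UU; elim/big_rec2: _ => [|i x y _ H]; first by rewrite cards0.
apply: leq_trans (leq_card_setU _ _).1 _; by rewrite leq_add2l.
Qed.

Lemma card_UUP T : T \in P -> #|UU T| <= r * k.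
Proof.
rewrite inE => /andP[/forallP Hc _]; apply: leq_trans (card_UU T) _.
rewrite (eq_bigr (fun _ => k)); last by move=> i _; apply/eqP.
by rewrite sum_nat_const card_ord.
Qed.

Lemma sum_fA (p : pred {set 'I_n}) :
  \sum_(A | p A) fA A = \sum_(T in P) #|[set A | p A & A \subset UU T]|.
Proof.
under eq_bigr => A _ do rewrite /fA card_sum_pred.
rewrite exchange_big /=; apply: eq_bigr => T _.
by rewrite card_sum_pred.
Qed.

Lemma core (S : {set 'I_n}) L :
  #|[set T in P | L <= #|S :&: UU T|]| * n ^ L <= (#|S| * (r * k)) ^ L * #|P|.
Proof.
case: (leqP L n) => Ln; last first.
  rewrite (_ : [set T in P | _] = set0) ?cards0 //.
  apply/setP => T; rewrite !inE; apply/negbTE; rewrite negb_and -ltnNge.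
  by rewrite (leq_ltn_trans _ Ln) ?orbT // (leq_trans (max_card _)) ?card_ord.
have : 0 < #|[set A : {set 'I_n} | #|A| == L]| by rewrite card_draws card_ord bin_gt0.
case/card_gt0P => A0; rewrite inE => /eqP cA0.
have feq (A : {set 'I_n}) : #|A| = L -> fA A = fA A0.
  by move=> cA; case: (perm_trans_sets (etrans cA0 (esym cA))) => s <-; rewrite fA_eq.
have step1 : #|[set T in P | L <= #|S :&: UU T|]| <= 'C(#|S|, L) * fA A0.
  have -> : 'C(#|S|, L) * fA A0 = \sum_(A : {set 'I_n} | (A \subset S) && (#|A| == L)) fA A.
    rewrite -cards_draws -sum_nat_const; apply/esym/eq_big => A; first by rewrite inE.
    by move=> /andP[_ /eqP]; apply: feq.
  rewrite sum_fA -sum1_card.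
  apply: (@leq_trans (\sum_(T in P) 'C(#|S :&: UU T|, L))).
    rewrite [X in _ <= X](bigID (fun T => L <= #|S :&: UU T|)) /=.
    apply: leq_trans (leq_addr _ _).
    rewrite big_mkcond [X in _ <= X]big_mkcond /=; apply: leq_sum => T _.
    by rewrite inE; case: (T \in P) => //=; case: ifP => // h; rewrite bin_gt0.
  apply: leq_sum => T _; rewrite -cards_draws; apply: subset_leq_card.
  apply/fintype.subsetP => A; rewrite !inE subsetI.
  by case: (A \subset S); case: (A \subset UU T); case: (#|A| == L).
have step2 : 'C(n, L) * fA A0 * n ^ L <= 'C(n, L) * (#|P| * (r * k) ^ L).
  have -> : 'C(n, L) * fA A0 = \sum_(A : {set 'I_n} | #|A| == L) fA A.
    rewrite -[n in 'C(n, L)]card_ord -card_draws -sum_nat_const; apply/esym/eq_big => A.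
      by rewrite inE.
    by move=> /eqP; apply: feq.
  rewrite sum_fA big_distrl /= mulnCA -[X in _ <= X]sum_nat_const.
  apply: leq_sum => T TP.
  have -> : #|[set A : {set 'I_n} | #|A| == L & A \subset UU T]| = 'C(#|UU T|, L).
    by rewrite -cards_draws; apply: eq_card => A; rewrite !inE andbC.
  have hU : #|UU T| <= n by rewrite (leq_trans (max_card _)) ?card_ord.
  apply: leq_trans (bin_exp_le _ _ L hU) _.
  by rewrite leq_mul2l expn_mono ?orbT // card_UUP.
have step3 : fA A0 * n ^ L <= #|P| * (r * k) ^ L.
  by move: step2; rewrite -mulnA leq_mul2l eqn0Ngt bin_gt0 Ln.
apply: leq_trans (leq_mul step1 (leqnn (n ^ L))) _.
rewrite -mulnA; apply: leq_trans (leq_mul (bin_le_exp _ _) step3) _.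
rewrite (expnMn #|S|) -mulnA leq_mul2l mulnC leqnn; exact: orbT.
Qed.

End Comb.

End CombM.
Import CombM.
Unset Implicit Arguments. Set Strict Implicit.
Import Order.TTheory GRing.Theory Num.Theory.
Local Open Scope ring_scope.

Section Real.
Variable R : realType.

Lemma pow_exp (n : nat) (x : R) : (0 < n)%N -> (n%:R : R) `^ x = expR (x * ln n%:R).
Proof.
move=> n0; rewrite /powR.
have : (n%:R : R) != 0 by rewrite pnatr_eq0 -lt0n.
by move/negbTE => ->.
Qed.

Lemma nat_exp (n : nat) : (0 < n)%N -> (n%:R : R) = expR (ln n%:R).
Proof. by move=> n0; rewrite lnK // posrE ltr0n. Qed.

Lemma ev_ln (C : R) : exists n0 : nat, forall n, (n0 <= n)%N ->
  C <= ln (n%:R : R) /\ (0 < n)%N.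
Proof.
exists (Num.truncn (expR C)).+1 => n hn.
have h : expR C < n%:R by apply: lt_le_trans (truncnS_gt _) _; rewrite ler_nat.
split; last by apply: leq_trans hn.
rewrite -ler_expR lnK ?posrE; [exact: ltW | exact: lt_trans (expR_gt0 C) h].
Qed.

Lemma part4 (eps : R) :
  (exists n0 : nat, forall n : nat, (n0 <= n)%N ->
     forall S1 S2 : {set 'I_n}, #|S1| = L25kpar eps n ->
       (#|S2|%:R : R) = (L25kpar eps n)%:R / (@L25rpar R n)%:R ->
       (1 - 0) * (@L25rpar R n)%:R * L25gfun (R:=R) S2 <= L25gfun (R:=R) S1).
Proof.
exists 0%N => n _ S1 S2 h1 h2; rewrite /L25gfun h1 h2 subr0 mul1r.
have [->|r0] := eqVneq (@L25rpar R n) 0%N; first by rewrite mul0r ler0n.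
by rewrite mulrC divfK ?pnatr_eq0.
Qed.

Lemma part3 (eps : R) (heps : 0 < eps) :
  (exists n0 : nat, forall n : nat, (n0 <= n)%N ->
     forall S : {set 'I_n}, #|S| = L25kpar eps n ->
       Num.max ((fun n => (n%:R : R) `^ (4^-1 - eps)) n * L25bfun (R:=R) S)
               ((fun n => (n%:R : R) `^ (4^-1 - eps)) n * L25mpfun (R:=R) S) <= L25gfun (R:=R) S).
Proof.
have [n0 H0] := ev_ln (16 / eps ^+ 2).
exists n0 => n /H0 [hl n0'] S hS /=.
rewrite /L25gfun /L25bfun /L25mpfun hS /L25kpar !pow_exp //.
set l := ln (n%:R : R).
have l0 : 0 <= l by apply: le_trans hl; apply: divr_ge0 => //; exact: exprn_ge0 (ltW heps).
set x := expR ((4^-1 - eps / 2) * l).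
set k := Num.truncn x.
have x0 : 0 <= x := expR_ge0 _.
have eA : expR ((4^-1 - eps) * l) = x * expR (- (eps / 2 * l)).
  by rewrite /x -expRD; congr expR; field.
rewrite ge_max; apply/andP; split.
  have [k0|kpos] := posnP k.
    rewrite k0 min_l ?mulr0 //.
  apply: le_trans (ler_wpM2l (expR_ge0 _) (_ : _ <= l)) _.
    by rewrite ge_min lexx orbT.
  have xk : x <= 2 * k%:R.
    apply: le_trans (ltW (truncnS_gt x)) _.
    by rewrite -/k -natrM ler_nat; lia.
  set E := expR (eps / 2 * l).
  have E0 : 0 < E := expR_gt0 _.
  have hE : 2 * l <= E.
    apply: le_trans (expR_ge1Dxn 1 _) ; last by apply: mulr_ge0 => //; apply: divr_ge0 => //; exact: ltW.
    have : 16 <= eps ^+ 2 * l by rewrite -ler_pdivrMl ?exprn_gt0 // mulrC.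
    rewrite /= expr2 => h.
    have -> : (1`! .+1)%:R = (2 : R) by [].
    nra.
  rewrite eA expRN -/E.
  have : x * l <= k%:R * E by nra.
  by move=> h; rewrite mulrAC ler_pdivrMr.
rewrite mulrA -expRD.
have q1 : expR ((4^-1 - eps) * l + - 4^-1 * l) <= 1.
  rewrite -expR0 ler_expR.
  nra.
apply: le_trans (ler_wpM2l (expR_ge0 _) (_ : _ <= k%:R)) _.
  by rewrite ge_min lexx orbT.
exact: ler_piMl.
Qed.


Lemma part2 (eps : R) (heps : 0 < eps) :
  (forall c : R, 0 < c -> exists n0 : nat, forall n : nat, (n0 <= n)%N ->
     forall S : {set 'I_n}, (fun n => (n%:R : R) `^ (2^-1 + eps / 4)) n <= #|S|%:R ->
       @prob_unif n (@L25rpar R n) (L25kpar eps n) R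
         (fun T : {ffun 'I_(@L25rpar R n) -> {set 'I_n}} => L25mfun (R:=R) (S :&: Mpart T) != 1)
       <= (n%:R : R) `^ (- c)).
Proof.
move=> c c0.
have [n0 H0] := ev_ln (4 / eps).
exists n0 => n /H0 [hl npos] S /=; rewrite pow_exp // => hS.
rewrite /prob_unif.
rewrite (_ : [set T in partitions _ _ _ | _] = finset.set0) ?cards0 ?mul0r ?powR_ge0 //.
apply/eqP; rewrite -finset.subset0; apply/fintype.subsetP => T; rewrite finset.in_set => /andP[TP /eqP H].
exfalso; apply: H.
rewrite /L25mfun; apply: min_l.
rewrite pow_exp // ler_pdivlMr ?expR_gt0 // mul1r.
set l := ln (n%:R : R).
rewrite -/l in hS hl.
have l0 : 0 <= l by apply: le_trans hl; apply: divr_ge0 => //; exact: ltW.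
have hU := card_UUP TP.
have hcard : (#|S| <= @L25rpar R n * L25kpar eps n + #|S :&: Mpart T|)%N.
  have := cardsID (UU T) S; rewrite finset.setDE.
  have : (#|S :&: UU T| <= #|UU T|)%N by apply: subset_leq_card; exact: subsetIr.
  rewrite /Mpart -/(UU T); lia.
have hr : ((@L25rpar R n)%:R : R) <= expR (4^-1 * l).
  by rewrite /L25rpar pow_exp // truncn_le expR_ge0.
have hk : ((L25kpar eps n)%:R : R) <= expR ((4^-1 - eps / 2) * l).
  by rewrite /L25kpar pow_exp // truncn_le expR_ge0.
set M := #|S :&: Mpart T|.
set A := expR (2^-1 * l).
set B := expR (eps / 4 * l).
set C := expR (- (eps / 2 * l)).
have A0 : 0 < A := expR_gt0 _.
have eT : A * B <= #|S|%:R.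
  apply: le_trans hS; rewrite /A /B -expRD ler_expR; nra.
have eRK : ((@L25rpar R n * L25kpar eps n)%N%:R : R) <= A * C.
  rewrite natrM; apply: le_trans (ler_pM (ler0n _ _) (ler0n _ _) hr hk) _.
  rewrite /A /C -!expRD ler_expR; nra.
have B2 : 2 <= B.
  apply: le_trans (expR_ge1Dx _).
  have : 4 <= eps * l by rewrite -ler_pdivrMl // mulrC.
  nra.
have C1 : C <= 1 by rewrite /C -expR0 ler_expR oppr_le0; apply: mulr_ge0 => //; apply: divr_ge0; [exact: ltW|].
have hM : (#|S|%:R : R) <= (@L25rpar R n * L25kpar eps n)%N%:R + M%:R by rewrite -natrD ler_nat.
nra.
Qed.

Lemma part1 (eps : R) (heps : 0 < eps) :
  (forall c : R, 0 < c -> exists n0 : nat, forall n : nat, (n0 <= n)%N ->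
     forall S : {set 'I_n}, #|S|%:R <= (fun n => (n%:R : R) `^ (2^-1 + eps / 4)) n ->
       @prob_unif n (@L25rpar R n) (L25kpar eps n) R
         (fun T : {ffun 'I_(@L25rpar R n) -> {set 'I_n}} =>
            ~~ [forall i, forall j,
                  L25gfun (R:=R) (S :&: T i) + L25bfun (R:=R) (S :&: Tminus T i)
                  == L25gfun (R:=R) (S :&: T j) + L25bfun (R:=R) (S :&: Tminus T j)])
       <= (n%:R : R) `^ (- c)).
Proof.
move=> c c0.
have [n0 H0] := ev_ln (4 * c / eps).
exists n0 => n /H0 [hl npos] S /=; rewrite !pow_exp // => hS.
set l := ln (n%:R : R).
rewrite -/l in hS hl.
have l0 : 0 <= l.
  apply: le_trans hl; apply: divr_ge0; last exact: ltW.
  by apply: mulr_ge0 => //; exact: ltW.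
set r := @L25rpar R n.
set k := L25kpar eps n.
set L := (Num.truncn l).+1.
set P := partitions n r k.
set bad := [set T in P | (L <= #|S :&: UU T|)%N].
have hcore := core r k S L.
rewrite -/P -/bad in hcore.
rewrite /prob_unif -/P.
set E := [set T in P | _].
have sub : E \subset bad.
  apply/fintype.subsetP => T; rewrite !finset.in_set => /andP[TP HE]; rewrite TP /=.
  case: (leqP L #|S :&: UU T|) => // hX; exfalso; move/negP: HE; apply.
  have Xl : (#|S :&: UU T|%:R : R) <= l.
    apply: le_trans (_ : ((Num.truncn l)%:R <= l)); last by rewrite truncn_le.
    by rewrite ler_nat -ltnS.
  have key i : L25gfun (R:=R) (S :&: T i) + L25bfun (R:=R) (S :&: Tminus T i)
      = #|S :&: UU T|%:R.
    have eU : UU T = T i :|: Tminus T i by rewrite /UU (bigD1 i).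
    have dj : [disjoint T i & Tminus T i].
      apply: bigcup_disjoint => j ji.
      move: TP => /andP[_ /forallP /(_ i) /forallP /(_ j) /implyP].
      by apply; rewrite eq_sym.
    have eX : #|S :&: UU T| = (#|S :&: T i| + #|S :&: Tminus T i|)%N.
      have e0 : (S :&: T i) :&: (S :&: Tminus T i) = finset.set0.
        by rewrite finset.setIACA finset.setIid (disjoint_setI0 dj) finset.setI0.
      by rewrite eU finset.setIUr cardsU e0 cards0 subn0.
    rewrite /L25gfun /L25bfun min_l.
      by rewrite eX natrD.
    apply: le_trans Xl; rewrite ler_nat eX; exact: leq_addl.
  by apply/forallP => i; apply/forallP => j; rewrite !key.
set y := ((#|S| * (r * k))%N%:R : R) / n%:R.
have y0 : 0 <= y by apply: divr_ge0.
have hy : y ^+ L <= expR (- (eps / 4 * l)) ^+ L.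
  apply: lerXn2r; rewrite ?nnegrE ?expR_ge0 //.
  rewrite /y ler_pdivrMr ?ltr0n // [in X in _ <= X](nat_exp n npos) -/l -expRD.
  have hr : (r%:R : R) <= expR (4^-1 * l).
    by rewrite /r /L25rpar pow_exp // truncn_le expR_ge0.
  have hk : (k%:R : R) <= expR ((4^-1 - eps / 2) * l).
    by rewrite /k /L25kpar pow_exp // truncn_le expR_ge0.
  rewrite !natrM; apply: le_trans (ler_pM (ler0n _ _) _ hS (ler_pM (ler0n _ _) (ler0n _ _) hr hk)) _.
    by apply: mulr_ge0.
  by rewrite -!expRD ler_expR; nra.
have hprob : (#|E|%:R : R) / #|P|%:R <= y ^+ L.
  have [P0|Ppos] := posnP #|P|.
    by rewrite P0 invr0 mulr0 exprn_ge0.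
  rewrite ler_pdivrMr ?ltr0n //.
  apply: le_trans (_ : (#|bad|%:R : R) <= _); first by rewrite ler_nat subset_leq_card.
  rewrite /y exprMn exprVn -!natrX mulrAC ler_pdivlMr ?ltr0n ?expn_gt0 ?npos // -!natrM ler_nat.
  exact: hcore.
apply: le_trans hprob _; apply: le_trans hy _.
rewrite -expRM_natl ler_expR.
have hL : l <= L%:R by exact: ltW (truncnS_gt l).
have hc : c <= eps / 4 * l.
  by move: hl; rewrite ler_pdivrMr // => h; nra.
have el : 0 <= eps / 4 * l by nra.
nra.
Qed.

End Real.

Theorem lemma25 (R : realType) (eps : R) (heps : 0 < eps) :
  has_gap (L25kpar eps) (@L25rpar R) (@L25gfun R) (@L25bfun R) (@L25mfun R) (@L25mpfun R)
    (fun n => (n%:R : R) `^ (4^-1 - eps)) (fun _ => 0)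
    (fun n => (n%:R : R) `^ (2^-1 + eps / 4)).
Proof.
split; first exact: part1.
split; first exact: part2.
split; first exact: part3.
exact: part4.
Qed.
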